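(* Consider the sub-$\ell^\infty$ structure on $\mathbb{R}^2$ defined by $X_1=\partial_x$, $X_2=x\partial_y$. The nonconstant extremal trajectories that have a singular arc (i.e. a $\varphi_j$-singular arc for some $j\in\{1,2\}$ for some extremal lift) are exactly the nonconstant admissible trajectories for which $u_1$ is a.e. constantly equal to $1$ or a.e. constantly equal to $-1$. Each of them consists of a single singular arc (the singularity holds on the whole domain of definition), and each of them is a time-minimizer.
   Context: Sub-$\ell^\infty$ structure defined by smooth vector fields $X_1,\dots,X_k$ on a manifold $M$: an admissible trajectory is an absolutely continuous curve $\gamma:[0,T]\to M$ together with a measurable control $u=(u_1,\dots,u_k):[0,T]\to\mathbb{R}^k$ with $|u_i(t)|\le1$ for all $i$ and a.e. $t$, such that $\dot\gamma(t)=\sum_i u_i(t)X_i(\gamma(t))$ for a.e. $t$. It is a time-minimizer (optimal) if no admissible trajectory joins $\gamma(0)$ to $\gamma(T)$ in time less than $T$. An extremal pair is a pair $(\lambda,\gamma)$ where $\gamma$ is admissible with control $u$ and $\lambda:[0,T]\to T^*M$ is absolutely continuous with $\lambda(t)\in T^*_{\gamma(t)}M\setminus\{0\}$, such that, with $\mathcal H(\lambda,p,u)=\sum_i u_i\langle\lambda,X_i(p)\rangle$, in canonical coordinates $\dot\lambda=-\partial_p\mathcal H(\lambda,\gamma,u)$, $\dot\gamma=\partial_\lambda\mathcal H(\lambda,\gamma,u)$ a.e., and there is a constant $\lambda_0\ge0$ with $\sum_iu_i(t)\langle\lambda(t),X_i(\gamma(t))\rangle=\sum_i|\langle\lambda(t),X_i(\gamma(t))\rangle|=\lambda_0$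 for a.e. $t$; $\gamma$ is then an extremal trajectory and $\lambda$ an extremal lift. The switching functions are $\varphi_j(t)=\langle\lambda(t),X_j(\gamma(t))\rangle$. The restriction of an extremal pair to an open interval $I$ is a $\varphi_j$-singular arc if $\varphi_j\equiv0$ on $I$. *)

(* Defs.v *)
From Stdlib Require Import Reals.
Open Scope R_scope.

Fixpoint sum_lt (n : nat) (g : nat -> R) : R :=
  match n with
  | O => 0
  | S m => sum_lt m g + g m
  end.

(** Lebesgue outer measure of A is <= r: for every eps > 0, A is covered by
    countably many open intervals (a k, b k) of total length <= r + eps. *)
Definition outer_le (A : R -> Prop) (r : R) : Prop :=
  forall eps, 0 < eps ->
    exists a b : nat -> R,
      (forall k, a k <= b k) /\
      (forall t, A t -> exists k, a k < t < b k) /\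
      (forall n, sum_lt n (fun k => b k - a k) <= r + eps).

Definition null_set (N : R -> Prop) : Prop := outer_le N 0.

Definition lmeasurable (E : R -> Prop) : Prop :=
  forall (A : R -> Prop) (r : R), outer_le A r ->
    exists r1 r2, r1 + r2 <= r /\
      outer_le (fun t => A t /\ E t) r1 /\
      outer_le (fun t => A t /\ ~ E t) r2.

Definition measurable_on (T : R) (u : R -> R) : Prop :=
  forall a, lmeasurable (fun t => 0 <= t <= T /\ a < u t).

Definition ae_on (T : R) (P : R -> Prop) : Prop :=
  exists N, null_set N /\ forall t, 0 < t < T -> ~ N t -> P t.

Definition abs_cont_on (T : R) (f : R -> R) : Prop :=
  forall eps, 0 < eps -> exists delta, 0 < delta /\
    forall (n : nat) (a b : nat -> R),
      (forall k, (k < n)%nat -> 0 <= a k /\ a k <= b k /\ b k <= T) ->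
      (forall k, (S k < n)%nat -> b k <= a (S k)) ->
      sum_lt n (fun k => b k - a k) < delta ->
      sum_lt n (fun k => Rabs (f (b k) - f (a k))) < eps.

(** A curve gamma = (x, y) on [0,T] (values outside [0,T] irrelevant),
    control u = (u1, u2).  Dynamics: gamma' = u1 X1(gamma) + u2 X2(gamma),
    i.e. x' = u1, y' = u2 * x. *)
Definition admissible (T : R) (x y u1 u2 : R -> R) : Prop :=
  0 <= T /\
  abs_cont_on T x /\ abs_cont_on T y /\
  measurable_on T u1 /\ measurable_on T u2 /\
  ae_on T (fun t => Rabs (u1 t) <= 1 /\ Rabs (u2 t) <= 1) /\
  ae_on T (fun t => derivable_pt_lim x t (u1 t) /\
                    derivable_pt_lim y t (u2 t * x t)).

(** Covector lambda = (p1, p2) in canonical coordinates.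
    H(lambda, (x,y), u) = u1 <lambda, X1> + u2 <lambda, X2>
                        = u1 p1 + u2 x p2.
    Switching functions: phi1 = <lambda,X1> = p1, phi2 = <lambda,X2> = x p2. *)
Inductive idx := J1 | J2.

Definition phi (j : idx) (x p1 p2 : R -> R) (t : R) : R :=
  match j with
  | J1 => p1 t
  | J2 => x t * p2 t
  end.

(** Extremal pair ((p1,p2), (x,y)) with control (u1,u2):
    lambda' = - d_p H = (- u2 p2, 0),  gamma' = d_lambda H (= admissibility),
    lambda(t) <> 0, and the maximality condition with constant lambda0 >= 0. *)
Definition extremal_pair (T : R) (x y u1 u2 p1 p2 : R -> R) : Prop :=
  admissible T x y u1 u2 /\
  abs_cont_on T p1 /\ abs_cont_on T p2 /\
  (forall t, 0 <= t <= T -> ~ (p1 t = 0 /\ p2 t = 0)) /\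
  ae_on T (fun t => derivable_pt_lim p1 t (- (u2 t * p2 t)) /\
                    derivable_pt_lim p2 t 0) /\
  exists lam0, 0 <= lam0 /\
    ae_on T (fun t =>
      u1 t * p1 t + u2 t * (x t * p2 t) = Rabs (p1 t) + Rabs (x t * p2 t) /\
      Rabs (p1 t) + Rabs (x t * p2 t) = lam0).

Definition singular_arc (T : R) (x p1 p2 : R -> R) (j : idx) (a b : R) : Prop :=
  0 <= a /\ a < b /\ b <= T /\
  forall t, a < t < b -> phi j x p1 p2 t = 0.

Definition has_singular_arc (T : R) (x y : R -> R) : Prop :=
  exists u1 u2 p1 p2, extremal_pair T x y u1 u2 p1 p2 /\
    exists j a b, singular_arc T x p1 p2 j a b.

Definition nonconstant (T : R) (x y : R -> R) : Prop :=
  exists t, 0 <= t <= T /\ (x t <> x 0 \/ y t <> y 0).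

Definition time_minimizer (T : R) (x y : R -> R) : Prop :=
  forall T' x' y' v1 v2, admissible T' x' y' v1 v2 ->
    x' 0 = x 0 -> y' 0 = y 0 -> x' T' = x T -> y' T' = y T ->
    T <= T'.

(* Main.v *)
Require Import Defs.
From Stdlib Require Import Reals Lra Lia Classical.
Open Scope R_scope.

Lemma sum_lt_S n g : sum_lt (S n) g = sum_lt n g + g n.
Proof. reflexivity. Qed.

Lemma sum_lt_ext n g h : (forall i, (i < n)%nat -> g i = h i) -> sum_lt n g = sum_lt n h.
Proof. induction n; simpl; intros H; auto. rewrite IHn by (intros; apply H; lia). rewrite H by lia. auto. Qed.

Lemma sum_lt_le n g h : (forall i, (i < n)%nat -> g i <= h i) -> sum_lt n g <= sum_lt n h.
Proof. induction n; simpl; intros H; [lra|]. apply Rplus_le_compat; [apply IHn; intros; apply H; lia | apply H; lia]. Qed.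

Lemma sum_lt_mono n m h : (forall i, 0 <= h i) -> (n <= m)%nat -> sum_lt n h <= sum_lt m h.
Proof. intros H Hnm. induction Hnm; [lra|]. simpl. specialize (H m). lra. Qed.

Lemma sum_lt_plus n g h : sum_lt n (fun i => g i + h i) = sum_lt n g + sum_lt n h.
Proof. induction n; simpl; [lra|]. rewrite IHn. ring. Qed.

Lemma sum_lt_scal n k g : sum_lt n (fun i => k * g i) = k * sum_lt n g.
Proof. induction n; simpl; [ring|]. rewrite IHn. ring. Qed.

Lemma sum_lt_add_at K k g e : (k < K)%nat ->
  sum_lt K (fun j => g j + (if Nat.eqb j k then e else 0)) = sum_lt K g + e.
Proof.
  induction K; intros Hk; [lia|]. simpl.
  destruct (Nat.eqb_spec K k) as [->|Hne].
  - rewrite (sum_lt_ext k _ g). lra. intros i Hi. destruct (Nat.eqb_spec i k); [lia|ring].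
  - rewrite IHK by lia. ring.
Qed.

Lemma double_facts k : Nat.even (2*k) = true /\ Nat.div2 (2*k) = k /\
  Nat.even (S (2*k)) = false /\ Nat.div2 (S (2*k)) = k.
Proof.
  induction k; [simpl; auto|].
  replace (2 * S k)%nat with (S (S (2*k))) by lia.
  change (Nat.even (2*k) = true /\ S (Nat.div2 (2*k)) = S k /\ Nat.even (S (2*k)) = false /\ S (Nat.div2 (S (2*k))) = S k).
  destruct IHk as [A [B [C D]]]. rewrite A, B, C, D. auto.
Qed.

Lemma null_union A B : null_set A -> null_set B -> null_set (fun t => A t \/ B t).
Proof.
  intros HA HB eps Heps.
  destruct (HA (eps/2)) as [a1 [b1 [H1 [C1 S1]]]]; [lra|].
  destruct (HB (eps/2)) as [a2 [b2 [H2 [C2 S2]]]]; [lra|].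
  exists (fun k => if Nat.even k then a1 (Nat.div2 k) else a2 (Nat.div2 k)).
  exists (fun k => if Nat.even k then b1 (Nat.div2 k) else b2 (Nat.div2 k)).
  split; [intros k; destruct (Nat.even k); auto|]. split.
  - intros t [Ht|Ht].
    + destruct (C1 t Ht) as [k Hk]. exists (2*k)%nat.
      destruct (double_facts k) as [A' [B' _]]. rewrite A', B'. auto.
    + destruct (C2 t Ht) as [k Hk]. exists (S (2*k))%nat.
      destruct (double_facts k) as [_ [_ [C' D']]]. rewrite C', D'. auto.
  - intros n.
    assert (Hint: forall m, sum_lt (2*m) (fun k => (if Nat.even k then b1 (Nat.div2 k) else b2 (Nat.div2 k)) - (if Nat.even k then a1 (Nat.div2 k) else a2 (Nat.div2 k)))
       = sum_lt m (fun k => b1 k - a1 k) + sum_lt m (fun k => b2 k - a2 k)).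
    { induction m; [simpl; ring|].
      replace (2 * S m)%nat with (S (S (2*m))) by lia. rewrite !sum_lt_S.
      rewrite IHm. destruct (double_facts m) as [A' [B' [C' D']]]. rewrite A', B', C', D'. ring. }
    eapply Rle_trans. apply (sum_lt_mono n (2*n)).
    + intros i. destruct (Nat.even i); [specialize (H1 (Nat.div2 i))|specialize (H2 (Nat.div2 i))]; lra.
    + lia.
    + rewrite Hint. specialize (S1 n). specialize (S2 n). lra.
Qed.

Lemma null_single s : null_set (fun c => c = s).
Proof.
  intros eps Heps.
  exists (fun k => match k with O => s - eps/2 | _ => 0 end).
  exists (fun k => match k with O => s + eps/2 | _ => 0 end).
  split; [intros [|k]; lra|]. split.
  - intros t ->. exists O. lra.
  - intros n. induction n; [simpl; lra|]. destruct n; simpl in *; lra.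
Qed.

Lemma ae_and T P Q : ae_on T P -> ae_on T Q -> ae_on T (fun t => P t /\ Q t).
Proof.
  intros [N1 [HN1 H1]] [N2 [HN2 H2]]. exists (fun t => N1 t \/ N2 t).
  split; [apply null_union; auto|]. intros t Ht Hn. split; [apply H1|apply H2]; tauto.
Qed.

Lemma ae_mono T (P Q : R -> Prop) : ae_on T P -> (forall t, 0 < t < T -> P t -> Q t) -> ae_on T Q.
Proof. intros [N [HN H]] HPQ. exists N. split; auto. Qed.
Lemma AC1 T f eps : abs_cont_on T f -> 0 < eps -> exists delta, 0 < delta /\
  forall a b, 0 <= a -> a <= b -> b <= T -> b - a < delta -> Rabs (f b - f a) < eps.
Proof.
  intros H He. destruct (H eps He) as [d [Hd H']]. exists d. split; auto.
  intros a b Ha Hab HbT Hlt.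
  specialize (H' 1%nat (fun _ => a) (fun _ => b)). simpl in H'.
  assert (0 + Rabs (f b - f a) < eps); [|lra].
  apply H'; [intros; lra | intros; lia | lra].
Qed.

Lemma AC_opp T f : abs_cont_on T f -> abs_cont_on T (fun c => - f c).
Proof.
  intros H eps He. destruct (H eps He) as [d [Hd H']]. exists d. split; auto.
  intros n a b H1 H2 H3. rewrite (sum_lt_ext n _ (fun k => Rabs (f (b k) - f (a k)))).
  apply H'; auto. intros i _. rewrite <- Rabs_Ropp. f_equal. ring.
Qed.

Lemma AC_const T k : abs_cont_on T (fun _ => k).
Proof.
  intros eps He. exists 1. split; [lra|]. intros n a b _ _ _.
  rewrite (sum_lt_ext n _ (fun _ => 0 * 0)). rewrite sum_lt_scal. lra.
  intros. replace (k - k) with 0 by ring. rewrite Rabs_R0. ring.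
Qed.

Lemma AC_shift T f M : abs_cont_on T f -> abs_cont_on T (fun c => f c - M * c).
Proof.
  intros H eps He. destruct (H (eps/2)) as [d [Hd H']]; [lra|].
  set (q := eps / (2 * (Rabs M + 1))).
  assert (Hq: q * (2 * (Rabs M + 1)) = eps) by (unfold q; field; pose proof (Rabs_pos M); lra).
  assert (Hq0: 0 < q) by (unfold q; apply Rdiv_lt_0_compat; [lra|pose proof (Rabs_pos M); lra]).
  exists (Rmin d q). split; [apply Rmin_pos; auto|].
  intros n a b H1 H2 H3.
  apply Rle_lt_trans with (sum_lt n (fun k => Rabs (f (b k) - f (a k)) + Rabs M * (b k - a k))).
  { apply sum_lt_le. intros i Hi. destruct (H1 i Hi) as [_ [Hab _]].
    replace (f (b i) - M * b i - (f (a i) - M * a i)) with ((f (b i) - f (a i)) + (- M) * (b i - a i)) by ring.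
    eapply Rle_trans; [apply Rabs_triang|]. rewrite Rabs_mult, Rabs_Ropp, (Rabs_pos_eq (b i - a i)) by lra. lra. }
  rewrite sum_lt_plus, sum_lt_scal.
  assert (S1: sum_lt n (fun k => Rabs (f (b k) - f (a k))) < eps/2).
  { apply H'; auto. eapply Rlt_le_trans; [exact H3|apply Rmin_l]. }
  assert (S0: 0 <= sum_lt n (fun k => b k - a k)).
  { replace 0 with (sum_lt n (fun _ => 0 * 0)) by (rewrite sum_lt_scal; ring).
    apply sum_lt_le. intros i Hi. destruct (H1 i Hi); lra. }
  assert (S2: sum_lt n (fun k => b k - a k) <= q).
  { left. eapply Rlt_le_trans; [exact H3|apply Rmin_r]. }
  pose proof (Rabs_pos M).
  assert (Rabs M * sum_lt n (fun k => b k - a k) <= Rabs M * q) by (apply Rmult_le_compat_l; auto).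
  nra.
Qed.

Lemma der_shift f c l M : derivable_pt_lim f c l -> derivable_pt_lim (fun z => f z - M * z) c (l - M).
Proof.
  intros H eps He. destruct (H eps He) as [d Hd]. exists d. intros h Hh Hlt.
  replace ((f (c + h) - M * (c + h) - (f c - M * c)) / h - (l - M)) with ((f (c + h) - f c) / h - l)
    by (field; auto). auto.
Qed.

Lemma der_opp f c l : derivable_pt_lim f c l -> derivable_pt_lim (fun z => - f z) c (- l).
Proof.
  intros H eps He. destruct (H eps He) as [d Hd]. exists d. intros h Hh Hlt.
  replace ((- f (c + h) - - f c) / h - - l) with (- ((f (c + h) - f c) / h - l))
    by (field; auto). rewrite Rabs_Ropp. auto.
Qed.

Lemma LOC f a b c : (forall z, a < z < b -> f z = 0) -> a < c < b -> derivable_pt_lim f c 0.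
Proof.
  intros Hz Hc eps Heps.
  assert (Hp: 0 < Rmin (c - a) (b - c)) by (apply Rmin_pos; lra).
  exists (mkposreal _ Hp). intros h Hh Hlt. simpl in Hlt.
  assert (A1: Rabs h < c - a) by (eapply Rlt_le_trans; [exact Hlt|apply Rmin_l]).
  assert (A2: Rabs h < b - c) by (eapply Rlt_le_trans; [exact Hlt|apply Rmin_r]).
  apply Rabs_def2 in A1. apply Rabs_def2 in A2.
  rewrite (Hz (c+h)) by lra. rewrite (Hz c) by lra.
  replace ((0 - 0) / h - 0) with 0 by (field; auto). rewrite Rabs_R0. lra.
Qed.

Lemma DB f sig l eps : derivable_pt_lim f sig l -> l <= 0 -> 0 < eps ->
  exists del, 0 < del /\ forall c d, sig - del < c -> c <= sig -> sig <= d -> d < sig + del ->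
    f d - f c <= eps * (d - c).
Proof.
  intros H Hl He. destruct (H eps He) as [del Hdel]. exists del. split; [apply cond_pos|].
  intros c d H1 H2 H3 H4.
  assert (Hd: f d - f sig <= eps * (d - sig)).
  { destruct (Req_dec d sig) as [->|Hne]; [replace (sig - sig) with 0 by ring; lra|].
    specialize (Hdel (d - sig)). replace (sig + (d - sig)) with d in Hdel by ring.
    assert (Hp: 0 < d - sig) by lra.
    destruct (Rabs_def2 _ _ (Hdel ltac:(lra) ltac:(rewrite Rabs_pos_eq; lra))) as [Q _].
    assert (E: f d - f sig = ((f d - f sig) / (d - sig)) * (d - sig)) by (field; lra).
    rewrite E. nra. }
  assert (Hc: f sig - f c <= eps * (sig - c)).
  { destruct (Req_dec c sig) as [->|Hne]; [replace (sig - sig) with 0 by ring; lra|].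
    specialize (Hdel (c - sig)). replace (sig + (c - sig)) with c in Hdel by ring.
    assert (Hp: 0 < sig - c) by lra.
    destruct (Rabs_def2 _ _ (Hdel ltac:(lra) ltac:(rewrite Rabs_left; lra))) as [Q _].
    assert (E: f sig - f c = ((f c - f sig) / (c - sig)) * (sig - c)) by (field; lra).
    rewrite E. nra. }
  assert (eps * (d - sig) + eps * (sig - c) = eps * (d - c)) by ring. lra.
Qed.

Lemma sup_prop (E : R -> Prop) m y : is_lub E m -> y < m -> exists c, E c /\ y < c.
Proof.
  intros [Hub Hl] Hy. apply NNPP; intro H.
  assert (is_upper_bound E y).
  { intros c Ec. destruct (Rle_dec c y); auto. exfalso. apply H. exists c. split; auto. lra. }
  specialize (Hl y H0). lra.
Qed.
Definition mlen (a b : nat -> R) (used : nat -> bool) (k : nat) : R :=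
  if used k then b k - a k else 0.

Definition good (f : R -> R) (a b : nat -> R) (s t eps c : R) : Prop :=
  s <= c <= t /\
  exists (n : nat) (al be : nat -> R) (used : nat -> bool) (K : nat),
   (forall i, (i < n)%nat -> s <= al i /\ al i <= be i /\ be i <= c) /\
   (forall i, (S i < n)%nat -> be i <= al (S i)) /\
   sum_lt n (fun i => be i - al i) <= sum_lt K (mlen a b used) /\
   (forall k, used k = true -> b k <= c \/ c = t) /\
   f c - f s <= eps * (c - s) + sum_lt n (fun i => Rabs (f (be i) - f (al i))).

Lemma good_s f a b s t eps : s <= t -> good f a b s t eps s.
Proof.
  intros Hst. split; [lra|]. exists O, (fun _ => 0), (fun _ => 0), (fun _ => false), O.
  split; [intros; lia|]. split; [intros; lia|]. split; [simpl; lra|].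
  split; [intros; discriminate|]. simpl. replace (s - s) with 0 by ring. lra.
Qed.

Lemma good_ext f a b s t eps c d : 0 <= eps -> good f a b s t eps c -> c <= d <= t -> c < t ->
  f d - f c <= eps * (d - c) -> good f a b s t eps d.
Proof.
  intros He [Hc [n [al [be [used [K [H1 [H2 [H3 [H4 H5]]]]]]]]]] Hd Hct Hf.
  split; [lra|]. exists n, al, be, used, K.
  split; [intros i Hi; destruct (H1 i Hi); lra|]. split; auto. split; auto.
  split; [intros k Hk; destruct (H4 k Hk); [left; lra|lra]|].
  assert (eps * (d - c) + eps * (c - s) = eps * (d - s)) by ring. lra.
Qed.

Lemma good_jump f a b s t eps c d k : 0 <= eps -> (forall k, a k <= b k) ->
  good f a b s t eps c -> c < t -> a k < c -> c < b k -> c <= d <= t -> d <= b k ->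
  (d = b k \/ d = t) -> good f a b s t eps d.
Proof.
  intros He Hab [Hc [n [al [be [used [K [H1 [H2 [H3 [H4 H5]]]]]]]]]] Hct Hak Hbk Hd Hdb Hor.
  assert (Uk: used k = false).
  { destruct (used k) eqn:E; auto. destruct (H4 k E); lra. }
  split; [lra|].
  exists (S n), (fun i => if Nat.eqb i n then c else al i), (fun i => if Nat.eqb i n then d else be i),
    (fun j => orb (used j) (Nat.eqb j k)), (K + S k)%nat.
  split.
  { intros i Hi. destruct (Nat.eqb_spec i n) as [->|Hne]; [lra|].
    destruct (H1 i ltac:(lia)); lra. }
  split.
  { intros i Hi. destruct (Nat.eqb_spec i n) as [->|Hne]; [lia|].
    destruct (Nat.eqb_spec (S i) n) as [E|Hne2].
    - destruct (H1 i ltac:(lia)); lra.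
    - apply H2; lia. }
  split.
  { rewrite sum_lt_S. rewrite Nat.eqb_refl.
    rewrite (sum_lt_ext n _ (fun i => be i - al i)).
    2:{ intros i Hi. destruct (Nat.eqb_spec i n); [lia|auto]. }
    rewrite (sum_lt_ext (K + S k) _ (fun j => mlen a b used j + (if Nat.eqb j k then b k - a k else 0))).
    2:{ intros j _. unfold mlen. destruct (Nat.eqb_spec j k) as [->|Hne].
        - rewrite Uk. simpl. ring.
        - rewrite Bool.orb_false_r. ring. }
    rewrite sum_lt_add_at by lia.
    assert (sum_lt K (mlen a b used) <= sum_lt (K + S k) (mlen a b used)).
    { apply sum_lt_mono; [|lia]. intros i. unfold mlen. destruct (used i); [specialize (Hab i)|]; lra. }
    lra. }
  split.
  { intros j Hj. apply Bool.orb_true_iff in Hj. destruct Hj as [Hj|Hj].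
    - destruct (H4 j Hj); [left; lra|lra].
    - apply Nat.eqb_eq in Hj. subst j. destruct Hor; [left|right]; lra. }
  rewrite sum_lt_S. rewrite !Nat.eqb_refl.
  rewrite (sum_lt_ext n _ (fun i => Rabs (f (be i) - f (al i)))).
  2:{ intros i Hi. destruct (Nat.eqb_spec i n); [lia|auto]. }
  assert (eps * (c - s) <= eps * (d - s)) by (apply Rmult_le_compat_l; lra).
  pose proof (Rle_abs (f d - f c)). lra.
Qed.

Lemma KL0 T f g N s t : abs_cont_on T f -> null_set N -> 0 <= s -> s <= t -> t <= T ->
  (forall c, s < c < t -> ~ N c -> derivable_pt_lim f c (g c) /\ g c <= 0) -> f t - f s <= 0.
Proof.
  intros HAC HN Hs Hst HtT Hder.
  assert (Hall: forall eps, 0 < eps -> f t - f s <= eps * (t - s) + eps).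
  { intros eps Heps.
    destruct (HAC eps Heps) as [delta [Hdelta HACd]].
    assert (HN': null_set (fun c => N c \/ (c = s \/ c = t)))
      by (apply null_union; [auto | apply null_union; apply null_single]).
    destruct (HN' (delta/2)) as [a [b [Hab [Hcov Hsum]]]]; [lra|].
    set (E := fun c => good f a b s t eps c).
    assert (Hbound: bound E) by (exists t; intros c [Hc _]; lra).
    assert (HEs: E s) by (apply good_s; auto).
    destruct (completeness E Hbound (ex_intro _ s HEs)) as [sig Hsig].
    assert (Hsig1: s <= sig) by (apply Hsig; auto).
    assert (Hsig2: sig <= t) by (apply Hsig; intros c [Hc _]; lra).
    assert (Et: E t).
    { destruct (classic (s < sig < t /\ ~ N sig)) as [[Hin HNs]|Hbad].
      - exfalso. destruct (Hder sig Hin HNs) as [Hd Hg].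
        destruct (DB _ _ _ eps Hd Hg Heps) as [del [Hdel HDB]].
        destruct (sup_prop E sig (sig - del) Hsig) as [c [Ec Hc]]; [lra|].
        assert (Hcs: c <= sig) by (apply Hsig; auto).
        set (d := Rmin (sig + del/2) t).
        assert (Hd1: d <= sig + del/2) by apply Rmin_l.
        assert (Hd2: d <= t) by apply Rmin_r.
        assert (Hd3: sig < d) by (apply Rmin_glb_lt; lra).
        assert (Ed: E d).
        { apply (good_ext f a b s t eps c d); try lra. exact Ec. apply HDB; lra. }
        assert (d <= sig) by (apply Hsig; auto). lra.
      - assert (HNs: N sig \/ (sig = s \/ sig = t)).
        { destruct (classic (N sig)) as [H|H]; [auto|]. right.
          destruct (Rle_lt_or_eq_dec _ _ Hsig1) as [H1|H1]; [|auto].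
          destruct (Rle_lt_or_eq_dec _ _ Hsig2) as [H2|H2]; [|auto].
          exfalso. apply Hbad. split; [lra|auto]. }
        destruct (Hcov sig HNs) as [k [Hk1 Hk2]].
        destruct (sup_prop E sig (a k) Hsig Hk1) as [c [Ec Hc]].
        assert (Hcs: c <= sig) by (apply Hsig; auto).
        assert (Hct: c <= t) by (destruct Ec; lra).
        destruct (Rle_lt_or_eq_dec _ _ Hct) as [Hct'|Hct']; [|rewrite <- Hct'; auto].
        set (d := Rmin (b k) t).
        assert (Hd1: d <= b k) by apply Rmin_l.
        assert (Hd2: d <= t) by apply Rmin_r.
        assert (Hd3: c < d) by (apply Rmin_glb_lt; lra).
        assert (Hor: d = b k \/ d = t) by (unfold d, Rmin; destruct Rle_dec; auto).
        assert (Ed: E d).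
        { apply (good_jump f a b s t eps c d k); auto; lra. }
        destruct Hor as [Hor|Hor]; [|rewrite <- Hor; auto].
        assert (d <= sig) by (apply Hsig; auto). lra. }
    destruct Et as [_ [n [al [be [used [K [H1 [H2 [H3 [H4 H5]]]]]]]]]].
    assert (Hs2: sum_lt n (fun i => Rabs (f (be i) - f (al i))) < eps).
    { apply HACd.
      - intros i Hi; destruct (H1 i Hi); lra.
      - exact H2.
      - assert (sum_lt K (mlen a b used) <= sum_lt K (fun k => b k - a k)).
        { apply sum_lt_le. intros i _. unfold mlen. specialize (Hab i). destruct (used i); lra. }
        specialize (Hsum K). lra. }
    lra. }
  destruct (Rle_dec (f t - f s) 0) as [|Hn]; auto. exfalso.
  set (D := f t - f s).
  assert (HD: 0 < D) by (unfold D; lra).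
  set (eps := D / (t - s + 2)).
  assert (He: 0 < eps) by (unfold eps; apply Rdiv_lt_0_compat; lra).
  assert (Heq: eps * (t - s + 2) = D) by (unfold eps; field; lra).
  specialize (Hall eps He). fold D in Hall. nra.
Qed.
Lemma KLae T f g M s t : abs_cont_on T f ->
  ae_on T (fun c => derivable_pt_lim f c (g c) /\ g c <= M) ->
  0 <= s -> s <= t -> t <= T -> f t - f s <= M * (t - s).
Proof.
  intros HAC [N [HN HP]] Hs Hst HtT.
  assert (H := KL0 T (fun c => f c - M * c) (fun c => g c - M) N s t (AC_shift T f M HAC) HN Hs Hst HtT).
  cut ((f t - M * t) - (f s - M * s) <= 0); [intros; lra|].
  apply H. intros c Hc HNc. destruct (HP c ltac:(lra) HNc) as [Hd Hg].
  split; [apply der_shift; auto|lra].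
Qed.

Lemma const_lemma T f : abs_cont_on T f -> ae_on T (fun c => derivable_pt_lim f c 0) ->
  forall t, 0 <= t <= T -> f t = f 0.
Proof.
  intros HAC Hae t Ht.
  assert (A: f t - f 0 <= 0 * (t - 0)).
  { apply (KLae T f (fun _ => 0)); auto; try lra.
    apply (ae_mono _ _ _ Hae). intros c _ H. split; auto; lra. }
  assert (B: (- f t) - (- f 0) <= 0 * (t - 0)).
  { apply (KLae T (fun z => - f z) (fun _ => 0)); auto; try lra. apply AC_opp; auto.
    apply (ae_mono _ _ _ Hae). intros c _ H. split; [|lra].
    replace 0 with (- 0) by ring. apply der_opp; auto. }
  lra.
Qed.

Lemma NN N a b : null_set N -> 0 <= a -> a < b -> exists c, a < c < b /\ ~ N c.
Proof.
  intros HN Ha Hab. apply NNPP; intro H.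
  assert (Hall: forall c, a < c < b -> N c) by (intros c Hc; apply NNPP; intro; apply H; eauto).
  assert (K := KL0 b (fun c => 0 - -1 * c) (fun _ => 0) N a b (AC_shift b (fun _ => 0) (-1) (AC_const b 0)) HN Ha ltac:(lra) ltac:(lra)).
  cut ((0 - -1 * b) - (0 - -1 * a) <= 0); [intros; lra|].
  apply K. intros c Hc HNc. exfalso. apply HNc. auto.
Qed.

Lemma DZ T f : 0 < T -> abs_cont_on T f -> ae_on T (fun c => f c = 0) ->
  forall t, 0 <= t <= T -> f t = 0.
Proof.
  intros HT HAC [N [HN HP]] t Ht. apply NNPP; intro Hne.
  assert (Hpos: 0 < Rabs (f t)) by (apply Rabs_pos_lt; auto).
  destruct (AC1 _ _ _ HAC Hpos) as [d [Hd Hac]].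
  set (lo := Rmax 0 (t - d/2)). set (hi := Rmin T (t + d/2)).
  assert (L1: 0 <= lo) by apply Rmax_l. assert (L2: t - d/2 <= lo) by apply Rmax_r.
  assert (U1: hi <= T) by apply Rmin_l. assert (U2: hi <= t + d/2) by apply Rmin_r.
  assert (Hlh: lo < hi) by (unfold lo, hi, Rmax, Rmin; repeat destruct Rle_dec; lra).
  destruct (NN N lo hi HN L1 Hlh) as [c [Hc HNc]].
  assert (Hfc: f c = 0) by (apply HP; auto; lra).
  destruct (Rle_dec c t).
  - specialize (Hac c t ltac:(lra) ltac:(lra) ltac:(lra) ltac:(lra)).
    rewrite Hfc, Rminus_0_r in Hac. lra.
  - specialize (Hac t c ltac:(lra) ltac:(lra) ltac:(lra) ltac:(lra)).
    rewrite Hfc, Rminus_0_l, Rabs_Ropp in Hac. lra.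
Qed.

Lemma Tpos T x y : nonconstant T x y -> 0 < T.
Proof.
  intros [t0 [Ht0 Hor]]. destruct (Rle_lt_or_eq_dec 0 T) as [H|H]; [lra|auto|].
  exfalso. subst T. assert (t0 = 0) by lra. subst. destruct Hor; auto.
Qed.

Lemma lemC T x y u1 u2 p1 p2 j a b : nonconstant T x y -> extremal_pair T x y u1 u2 p1 p2 ->
  singular_arc T x p1 p2 j a b -> forall t, 0 <= t <= T -> p2 t = 0.
Proof.
  intros Hnc [[HT [HACx [HACy [_ [_ [Hbd Hder]]]]]] [HAC1 [HAC2 [Hnz [Hdp [lam0 [Hl0 Hmax]]]]]]]
    [Ha [Hab [HbT Hsing]]].
  pose proof (Tpos _ _ _ Hnc) as HTp.
  assert (Hp2: forall t, 0 <= t <= T -> p2 t = p2 0).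
  { apply const_lemma; auto. apply (ae_mono _ _ _ Hdp). intros ? _ [_ H]; exact H. }
  intros t Ht. rewrite (Hp2 t Ht). apply NNPP; intro Hq.
  pose proof (ae_and _ _ _ Hder (ae_and _ _ _ Hdp Hmax)) as Hall.
  pose proof Hall as [N [HN HP]].
  assert (HlamZ: lam0 = 0).
  { destruct (NN N a b HN Ha Hab) as [c [Hc HNc]].
    destruct (HP c ltac:(lra) HNc) as [[Hdx Hdy] [[Hdp1 Hdp2] [Hm1 Hm2]]].
    assert (Hp2c: p2 c = p2 0) by (apply Hp2; lra).
    destruct j; simpl in Hsing.
    - assert (H0: derivable_pt_lim p1 c 0) by (apply (LOC p1 a b); auto).
      assert (Hu: -(u2 c * p2 c) = 0) by (eapply uniqueness_limite; eauto).
      assert (Hu2: u2 c = 0).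
      { rewrite Hp2c in Hu. assert (u2 c * p2 0 = 0) by lra.
        apply Rmult_integral in H. destruct H; auto; contradiction. }
      rewrite (Hsing c Hc) in Hm1, Hm2. rewrite Hu2 in Hm1. rewrite Rabs_R0 in *.
      pose proof (Rabs_pos (x c * p2 c)). lra.
    - assert (Hx0: forall z, a < z < b -> x z = 0).
      { intros z Hz. specialize (Hsing z Hz). rewrite (Hp2 z) in Hsing by lra.
        apply Rmult_integral in Hsing. destruct Hsing; auto; contradiction. }
      assert (H0: derivable_pt_lim x c 0) by (apply (LOC x a b); auto).
      assert (Hu1: u1 c = 0) by (eapply uniqueness_limite; eauto).
      rewrite (Hx0 c Hc) in Hm1, Hm2. rewrite Hu1 in Hm1.
      rewrite !Rmult_0_l, Rabs_R0 in *. rewrite Rmult_0_r in Hm1.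
      pose proof (Rabs_pos (p1 c)). lra. }
  subst lam0.
  assert (Hx: forall t, 0 <= t <= T -> x t = 0).
  { apply DZ; auto. apply (ae_mono _ _ _ Hall). intros c Hc [_ [_ [_ Hm2]]].
    pose proof (Rabs_pos (p1 c)). pose proof (Rabs_pos (x c * p2 c)).
    assert (Rabs (x c * p2 c) = 0) by lra.
    destruct (Req_dec (x c * p2 c) 0) as [E|E].
    - rewrite (Hp2 c) in E by lra. apply Rmult_integral in E. destruct E; auto; contradiction.
    - apply Rabs_pos_lt in E. lra. }
  assert (Hy: forall t, 0 <= t <= T -> y t = y 0).
  { apply const_lemma; auto. apply (ae_mono _ _ _ Hall). intros c Hc [[_ Hdy] _].
    rewrite (Hx c) in Hdy by lra. rewrite Rmult_0_r in Hdy. exact Hdy. }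
  destruct Hnc as [t0 [Ht0 [H|H]]]; apply H.
  - rewrite (Hx t0 Ht0), (Hx 0); auto; lra.
  - apply Hy; auto.
Qed.
Lemma fwd T x y : nonconstant T x y -> has_singular_arc T x y ->
  exists u1 u2, admissible T x y u1 u2 /\
    (ae_on T (fun t => u1 t = 1) \/ ae_on T (fun t => u1 t = -1)).
Proof.
  intros Hnc [u1 [u2 [p1 [p2 [He [j [a [b Hs]]]]]]]].
  pose proof (lemC _ _ _ _ _ _ _ _ _ _ Hnc He Hs) as Hp2.
  exists u1, u2. destruct He as [Had [HAC1 [HAC2 [Hnz [Hdp [lam0 [Hl0 Hmax]]]]]]].
  split; auto.
  pose proof (Tpos _ _ _ Hnc) as HT.
  assert (Hp1: forall t, 0 <= t <= T -> p1 t = p1 0).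
  { apply const_lemma; auto. apply (ae_mono _ _ _ Hdp). intros c Hc [Hd _].
    rewrite (Hp2 c) in Hd by lra. replace (-(u2 c * 0)) with 0 in Hd by ring. exact Hd. }
  assert (Hp10: p1 0 <> 0).
  { intro E. apply (Hnz 0); [lra|]. split; auto. apply Hp2; lra. }
  destruct (Rlt_or_le 0 (p1 0)) as [Hpos|Hneg].
  - left. apply (ae_mono _ _ _ Hmax). intros c Hc [Hm _].
    rewrite (Hp2 c), (Hp1 c) in Hm by lra. rewrite !Rmult_0_r, Rabs_R0, Rabs_pos_eq in Hm by lra.
    apply Rmult_eq_reg_r with (p1 0); lra.
  - right. assert (Hn: p1 0 < 0) by (destruct Hneg; [auto|contradiction]).
    apply (ae_mono _ _ _ Hmax). intros c Hc [Hm _].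
    rewrite (Hp2 c), (Hp1 c) in Hm by lra. rewrite !Rmult_0_r, Rabs_R0, Rabs_left in Hm by lra.
    apply Rmult_eq_reg_r with (p1 0); lra.
Qed.

Lemma bwd_sg T x y u1 u2 sg : 0 < T -> sg * sg = 1 -> Rabs sg = 1 -> admissible T x y u1 u2 ->
  ae_on T (fun t => u1 t = sg) -> has_singular_arc T x y.
Proof.
  intros HT Hsg Hab Had Hu.
  exists u1, u2, (fun _ => sg), (fun _ => 0). split.
  - split; auto. split; [apply AC_const|]. split; [apply AC_const|].
    split; [intros t _ [H _]; rewrite H in Hsg; lra|].
    split.
    + apply (ae_mono _ _ _ Hu). intros t _ _. split.
      * replace (-(u2 t * 0)) with 0 by ring. apply derivable_pt_lim_const.
      * apply derivable_pt_lim_const.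
    + exists 1. split; [lra|]. apply (ae_mono _ _ _ Hu). intros c _ Hc. rewrite Hc.
      rewrite !Rmult_0_r, Rabs_R0, Hab. lra.
  - exists J2, 0, T. split; [lra|]. split; [lra|]. split; [lra|].
    intros t _. simpl. ring.
Qed.

Lemma minimizer T x y u1 u2 : admissible T x y u1 u2 ->
  (ae_on T (fun t => u1 t = 1) \/ ae_on T (fun t => u1 t = -1)) -> time_minimizer T x y.
Proof.
  intros Had Hor T' x' y' v1 v2 Had' E0 _ ET _.
  destruct Had as [HT [HACx [_ [_ [_ [Hbd Hder]]]]]].
  destruct Had' as [HT' [HACx' [_ [_ [_ [Hbd' Hder']]]]]].
  assert (Hae': ae_on T' (fun t => (Rabs (v1 t) <= 1 /\ Rabs (v2 t) <= 1) /\
     (derivable_pt_lim x' t (v1 t) /\ derivable_pt_lim y' t (v2 t * x' t)))) by (apply ae_and; auto).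
  assert (A1: x' T' - x' 0 <= 1 * (T' - 0)).
  { apply (KLae T' x' v1); auto; try lra. apply (ae_mono _ _ _ Hae').
    intros c _ [[Hb _] [Hd _]]. split; auto. pose proof (Rle_abs (v1 c)). lra. }
  assert (A2: (- x' T') - (- x' 0) <= 1 * (T' - 0)).
  { apply (KLae T' (fun z => - x' z) (fun z => - v1 z)); auto; try lra. apply AC_opp; auto.
    apply (ae_mono _ _ _ Hae').
    intros c _ [[Hb _] [Hd _]]. split; [apply der_opp; auto|].
    pose proof (Rle_abs (- v1 c)). rewrite Rabs_Ropp in H. lra. }
  destruct Hor as [Hu|Hu].
  - assert (B: (- x T) - (- x 0) <= -1 * (T - 0)).
    { apply (KLae T (fun z => - x z) (fun z => - u1 z)); auto; try lra. apply AC_opp; auto.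
      apply (ae_mono _ _ _ (ae_and _ _ _ Hder Hu)).
      intros c _ [[Hd _] Hc]. split; [apply der_opp; auto|lra]. }
    lra.
  - assert (B: x T - x 0 <= -1 * (T - 0)).
    { apply (KLae T x u1); auto; try lra.
      apply (ae_mono _ _ _ (ae_and _ _ _ Hder Hu)).
      intros c _ [[Hd _] Hc]. split; auto; lra. }
    lra.
Qed.

Theorem mainTheorem9 :
  forall (T : R) (x y : R -> R),
    nonconstant T x y ->
    (has_singular_arc T x y <->
       exists u1 u2, admissible T x y u1 u2 /\
         (ae_on T (fun t => u1 t = 1) \/ ae_on T (fun t => u1 t = -1))) /\
    (has_singular_arc T x y ->
       (forall u1 u2 p1 p2 j a b,
          extremal_pair T x y u1 u2 p1 p2 ->
          singular_arc T x p1 p2 j a b ->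
          forall t, 0 < t < T -> phi j x p1 p2 t = 0) /\
       time_minimizer T x y).
Proof.
  intros T x y Hnc. pose proof (Tpos _ _ _ Hnc) as HT. split; [split|].
  - apply fwd; auto.
  - intros [u1 [u2 [Had [Hu|Hu]]]].
    + apply (bwd_sg T x y u1 u2 1); auto; try lra. apply Rabs_R1.
    + apply (bwd_sg T x y u1 u2 (-1)); auto; try lra. rewrite Rabs_left; lra.
  - intros Hs. split.
    + intros u1 u2 p1 p2 j a b He Hsa t Ht.
      pose proof (lemC _ _ _ _ _ _ _ _ _ _ Hnc He Hsa) as Hp2.
      destruct j; simpl.
      * exfalso. destruct Hsa as [Ha [Hab [HbT Hsing]]]. simpl in Hsing.
        destruct He as [_ [_ [_ [Hnz _]]]].
        apply (Hnz ((a+b)/2)); [lra|]. split; [apply Hsing; lra|apply Hp2; lra].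
      * rewrite Hp2 by lra. ring.
    + destruct (fwd _ _ _ Hnc Hs) as [u1 [u2 [Had Hor]]]. eapply minimizer; eauto.
Qed.
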